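(* The singular locus of $O$ has ten irreducible components. The component $S_{(x_0,x_1)}$ is given by $$x_0-x_1=0,\qquad x_2^2+x_3^2+x_4^2-2x_2x_3-2x_2x_4-2x_3x_4=0$$ (and $w=0$), and the other nine components $S_{(x_i,x_j)}$, $0\le i<j\le4$, are obtained from it by permuting the coordinates $x_0,\ldots,x_4$.
   Context: Let $$\Delta'(x_0,\ldots,x_4):=\prod_{i_1,\ldots,i_4\in\{0,1\}}\big(\sqrt{x_0}+(-1)^{i_1}\sqrt{x_1}+(-1)^{i_2}\sqrt{x_2}+(-1)^{i_3}\sqrt{x_3}+(-1)^{i_4}\sqrt{x_4}\big)\in\mathbb{Q}[x_0,\ldots,x_4],$$ a symmetric form of degree $8$. $O$ is the double covering $\pi:O\to\mathbf{P}^4_{\mathbb{Q}}$ given by $w^2=(-3)\Delta'(x_0,\ldots,x_4)$, i.e. the hypersurface with this equation in the weighted projective space $\mathbf{P}(4,1,1,1,1,1)$ with coordinates $w,x_0,\ldots,x_4$, with $\pi$ the projection to $(x_0:\ldots:x_4)$. *)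

(* Defs.v *)
From HB Require Import structures.
From mathcomp Require Import all_boot all_order all_algebra all_field.
From mathcomp Require Import mpoly.
Set Implicit Arguments. Unset Strict Implicit. Unset Printing Implicit Defensive.
Import Order.TTheory GRing.Theory Num.Theory.
Local Open Scope ring_scope.

(* Points of the affine 6-space algC^6 with coordinates (w, x_0, ..., x_4):
   coordinate ord0 is w, coordinate (lift ord0 i) is x_i. *)
Definition pt6 := 'I_6 -> algC.

(* P(y_0,..,y_4) = prod over sign choices of (y_0 +- y_1 +- y_2 +- y_3 +- y_4);
   Delta' is the polynomial with Delta'(y_0^2,...,y_4^2) = P(y). *)
Definition Psigned : {mpoly algC[5]} :=
  \prod_(e : {ffun 'I_4 -> bool})
     ('X_ord0 + \sum_(k < 4) ((-1) ^+ e k) *: 'X_(lift ord0 k)).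

Definition squares5 : 5.-tuple {mpoly algC[5]} := [tuple 'X_i ^+ 2 | i < 5].

(* D is Delta' exactly when  D \mPo squares5 = Psigned  (this characterizes
   Delta' uniquely). *)
Definition is_Delta' (D : {mpoly algC[5]}) : Prop := D \mPo squares5 = Psigned.

Definition xvars : 5.-tuple {mpoly algC[6]} := [tuple 'X_(lift ord0 i) | i < 5].

Definition Oeq (D : {mpoly algC[5]}) : {mpoly algC[6]} :=
  'X_ord0 ^+ 2 - (-3) *: (D \mPo xvars).

(* Affine cone (in algC^6) over the singular locus of O:
   the points where the equation and all its partial derivatives vanish.
   (It contains the vertex 0.) *)
Definition SingCone (D : {mpoly algC[5]}) (v : pt6) : Prop :=
  (Oeq D).@[v] = 0 /\ forall k : 'I_6, ((Oeq D)^`M(k)).@[v] = 0.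

Definition xc (v : pt6) (i : 'I_5) : algC := v (lift ord0 i).

Definition Scomp (i j : 'I_5) (v : pt6) : Prop :=
  v ord0 = 0 /\ xc v i = xc v j /\
  \sum_(t < 5 | (t != i) && (t != j)) xc v t ^+ 2
  - 2 * \sum_(s < 5 | (s != i) && (s != j))
          \sum_(t < 5 | [&& (s < t)%N, t != i & t != j]) xc v s * xc v t = 0.

Definition zclosed (n : nat) (A : ('I_n -> algC) -> Prop) : Prop :=
  exists S : {mpoly algC[n]} -> Prop,
    forall v, A v <-> (forall p, S p -> p.@[v] = 0).

Definition zirreducible (n : nat) (A : ('I_n -> algC) -> Prop) : Prop :=
  (exists v, A v) /\
  forall Z1 Z2 : ('I_n -> algC) -> Prop, zclosed Z1 -> zclosed Z2 ->
    (forall v, A v -> Z1 v \/ Z2 v) ->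
    (forall v, A v -> Z1 v) \/ (forall v, A v -> Z2 v).

(* Main.v *)
Require Import Defs.
From HB Require Import structures.
From mathcomp Require Import all_boot all_order all_algebra all_field.
From mathcomp Require Import mpoly.
From mathcomp Require Import ring.
From Stdlib Require Import Classical.
Set Implicit Arguments. Unset Strict Implicit. Unset Printing Implicit Defensive.
Import Order.TTheory GRing.Theory Num.Theory.
Local Open Scope ring_scope.

Lemma mderivXU (n : nat) (i j : 'I_n) :
  ('X_j : {mpoly algC[n]})^`M(i) = ((j == i)%:R)%:MP.
Proof.
rewrite mderivX mnm1E; case: eqP => [->|_].
  have -> : (U_(i) - U_(i))%MM = 0%MM by apply/mnmP => l; rewrite mnmBE mnm0E subnn.
  by rewrite mpolyX0 scale1r mpolyC1.
by rewrite scale0r mpolyC0.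
Qed.

Lemma chain_rule (n k : nat) (lq : n.-tuple {mpoly algC[k]}) (i : 'I_k)
  (p : {mpoly algC[n]}) :
  (p \mPo lq)^`M(i) = \sum_(j < n) (p^`M(j) \mPo lq) * (tnth lq j)^`M(i).
Proof.
pose good (p : {mpoly algC[n]}) :=
  (p \mPo lq)^`M(i) = \sum_(j < n) (p^`M(j) \mPo lq) * (tnth lq j)^`M(i).
have gD p1 p2 : good p1 -> good p2 -> good (p1 + p2).
  rewrite /good comp_mpolyD mderivD => -> ->; rewrite -big_split /=.
  by apply: eq_bigr => j _; rewrite mderivD comp_mpolyD mulrDl.
have gZ c p1 : good p1 -> good (c *: p1).
  rewrite /good comp_mpolyZ mderivZ => ->; rewrite scaler_sumr.
  by apply: eq_bigr => j _; rewrite mderivZ comp_mpolyZ scalerAl.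
have gM p1 p2 : good p1 -> good p2 -> good (p1 * p2).
  rewrite /good rmorphM /= mderivM => -> ->.
  rewrite mulr_suml mulr_sumr -big_split /=.
  apply: eq_bigr => j _; rewrite mderivM comp_mpolyD !rmorphM /=; ring.
have g1 : good 1.
  rewrite /good comp_mpoly1 -mpolyC1 mderivC big1 // => j _.
  by rewrite mderivC comp_mpoly0 mul0r.
have gX j : good 'X_j.
  rewrite /good comp_mpolyXU (bigD1 j) //= big1 => [|j' hj'].
    by rewrite mderivXU eqxx comp_mpolyC mpolyC1 mul1r addr0 -tnth_nth.
  by rewrite mderivXU eq_sym (negbTE hj') mpolyC0 comp_mpoly0 mul0r.
have gXm m : good 'X_[m].
  rewrite mpolyXE_id; apply: (big_ind good) => // j _.
  elim: (m j) => [|e ih]; first by rewrite expr0.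
  by rewrite exprS; apply: gM.
elim/mpolyind: p => [|c m p _ _ ih].
  rewrite /good comp_mpoly0 mderiv0 big1 // => j _.
  by rewrite mderiv0 comp_mpoly0 mul0r.
by apply: gD => //; apply: gZ.
Qed.

Definition y2 (y : 'I_5 -> algC) := fun i => y i ^+ 2.

Lemma sum_delta (n : nat) (k : 'I_n) (F : 'I_n -> algC) :
  \sum_(j < n) (j == k)%:R * F j = F k.
Proof.
rewrite (bigD1 k) //= eqxx mul1r big1 ?addr0 // => j /negbTE ->.
by rewrite mul0r.
Qed.

Lemma eval_derX2 (y : 'I_5 -> algC) j k :
  ((('X_j : {mpoly algC[5]}) ^+ 2)^`M(k)).@[y] = (j == k)%:R * (2 * y j).
Proof.
rewrite expr2 mderivM mderivXU mevalD !mevalM mevalC mevalXU; ring.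
Qed.

Lemma eval_derX2' (y : 'I_5 -> algC) j k :
  ((('X_j : {mpoly algC[5]}) ^+ 2)^`M(k)^`M(k)).@[y] = (j == k)%:R * 2.
Proof.
rewrite expr2 mderivM mderivD !mderivM !mderivXU !mderivC !mevalD !mevalM !mevalC.
rewrite !mevalXU; case: (j == k); rewrite /= ?mulr1n ?mulr0n; ring.
Qed.

Lemma E0 (D : {mpoly algC[5]}) y : (D \mPo squares5).@[y] = D.@[y2 y].
Proof.
rewrite comp_mpoly_meval; apply: meval_eq => i.
by rewrite /squares5 tnth_mktuple rmorphXn /= mevalXU.
Qed.

Lemma E1 (D : {mpoly algC[5]}) y k :
  ((D \mPo squares5)^`M(k)).@[y] = 2 * y k * (D^`M(k)).@[y2 y].
Proof.
rewrite chain_rule (raddf_sum (meval y)) /=.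
rewrite (eq_bigr (fun j => (j == k)%:R * (2 * y j * (D^`M(j)).@[y2 y]))).
  by rewrite sum_delta.
move=> j _; rewrite mevalM E0 /squares5 tnth_mktuple eval_derX2; ring.
Qed.

Lemma E2 (D : {mpoly algC[5]}) y k : y k = 0 ->
  ((D \mPo squares5)^`M(k)^`M(k)).@[y] = 2 * (D^`M(k)).@[y2 y].
Proof.
move=> yk0; rewrite chain_rule (raddf_sum (mderiv k)) (raddf_sum (meval y)) /=.
rewrite (eq_bigr (fun j => (j == k)%:R * (2 * (D^`M(j)).@[y2 y]))).
  by rewrite sum_delta.
move=> j _; rewrite mderivM mevalD !mevalM E0 /squares5 tnth_mktuple.
rewrite eval_derX2 eval_derX2'.
have -> : (j == k)%:R * (2 * y j) = 0 :> algC.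
  by case: eqP => [->|_]; rewrite ?yk0 ?mulr0 ?mul0r.
by rewrite mulr0 add0r mulrC -mulrA.
Qed.

Lemma eval_derX2n n (y : 'I_n -> algC) j k :
  ((('X_j : {mpoly algC[n]}) ^+ 2)^`M(k)).@[y] = (j == k)%:R * (2 * y j).
Proof.
rewrite expr2 mderivM mderivXU mevalD !mevalM mevalC mevalXU; ring.
Qed.

Lemma Exv (D : {mpoly algC[5]}) (v : pt6) : (D \mPo xvars).@[v] = D.@[xc v].
Proof.
rewrite comp_mpoly_meval; apply: meval_eq => i.
by rewrite /xvars tnth_mktuple mevalXU.
Qed.

Lemma Oeq_eval D v : (Oeq D).@[v] = v ord0 ^+ 2 + 3 * D.@[xc v].
Proof. by rewrite /Oeq mevalB mevalZ rmorphXn /= mevalXU Exv; ring. Qed.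

Lemma Oeq_der D v k : ((Oeq D)^`M(k)).@[v] =
  (ord0 == k)%:R * (2 * v ord0) +
  3 * \sum_(j < 5) (D^`M(j)).@[xc v] * (lift ord0 j == k)%:R.
Proof.
rewrite /Oeq mderivB mderivZ mevalB mevalZ eval_derX2n chain_rule.
rewrite (raddf_sum (meval v)); congr (_ + _); rewrite mulNr opprK; congr (_ * _).
apply: eq_bigr => j _ /=. rewrite mevalM Exv /xvars tnth_mktuple mderivXU mevalC.
by [].
Qed.

Lemma SingCone_iff D v : SingCone D v <->
  v ord0 = 0 /\ D.@[xc v] = 0 /\ forall i, (D^`M(i)).@[xc v] = 0.
Proof.
have h2 : (2 : algC) != 0 by rewrite pnatr_eq0.
have h3 : (3 : algC) != 0 by rewrite pnatr_eq0.
split.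
  case=> hO hd.
  have v0 : v ord0 = 0.
    move: (hd ord0); rewrite Oeq_der eqxx big1 => [|j _]; last first.
      have /negbTE -> : lift ord0 j != ord0 by rewrite eq_sym neq_lift.
      by rewrite mulr0.
    by rewrite mulr0 addr0 mul1r => /eqP; rewrite mulf_eq0 (negbTE h2) => /eqP.
  split=> //; split.
    by move: hO; rewrite Oeq_eval v0 expr0n /= add0r => /eqP; rewrite mulf_eq0 (negbTE h3) => /eqP.
  move=> i; move: (hd (lift ord0 i)); rewrite Oeq_der (negbTE (neq_lift _ _)) mul0r add0r.
  rewrite (eq_bigr (fun j => (j == i)%:R * (D^`M(j)).@[xc v])) ?sum_delta.
    by move=> /eqP; rewrite mulf_eq0 (negbTE h3) => /eqP.
  by move=> j _; rewrite (inj_eq (@lift_inj _ ord0)) mulrC.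
case=> v0 [hD hd]; split; first by rewrite Oeq_eval v0 hD; ring.
move=> k; rewrite Oeq_der v0 mulr0 mulr0 add0r big1 ?mulr0 // => j _.
by rewrite hd mul0r.
Qed.

Definition pat := {ffun 'I_4 -> bool}.
Definition sv (e : pat) (a : 'I_5) : algC :=
  if unlift ord0 a is Some k then (-1) ^+ e k else 1.
Definition Lpoly (e : pat) : {mpoly algC[5]} :=
  'X_ord0 + \sum_(k < 4) ((-1) ^+ e k) *: 'X_(lift ord0 k).
Definition Lval (e : pat) (y : 'I_5 -> algC) := \sum_a sv e a * y a.

Lemma Psigned_E : Psigned = \prod_(e : pat) Lpoly e.
Proof. by []. Qed.

Lemma Lpoly_E e : Lpoly e = \sum_a sv e a *: 'X_a.
Proof.
rewrite big_ord_recl /sv unlift_none scale1r; congr (_ + _).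
by apply: eq_bigr => k _; rewrite liftK.
Qed.

Lemma Lpoly_eval e y : (Lpoly e).@[y] = Lval e y.
Proof.
rewrite Lpoly_E (raddf_sum (meval y)); apply: eq_bigr => a _ /=.
by rewrite mevalZ mevalXU.
Qed.

Lemma Lpoly_der e b : (Lpoly e)^`M(b) = (sv e b)%:MP.
Proof.
rewrite Lpoly_E (raddf_sum (mderiv b)) /=.
rewrite (eq_bigr (fun a => ((a == b)%:R * sv e a)%:MP)).
  by rewrite -rmorph_sum /= sum_delta.
by move=> a _; rewrite mderivZ mderivXU -mul_mpolyC -rmorphM /= mulrC.
Qed.

Lemma sv_sq e a : sv e a ^+ 2 = 1.
Proof. rewrite /sv; case: unlift => [k|]; last exact: expr1n.
by rewrite -exprM mulnC exprM sqrrN expr1n expr1n. Qed.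

Lemma sv_neq0 e a : sv e a != 0.
Proof. by apply/eqP => h; move: (sv_sq e a); rewrite h expr0n /= => /eqP; rewrite eq_sym oner_eq0. Qed.

Section PD.
Variable (y : 'I_5 -> algC) (b : 'I_5).
Implicit Types p q r s : {mpoly algC[5]}.

Lemma V1 p q : p.@[y] = 0 -> (p * q).@[y] = 0.
Proof. by move=> h; rewrite mevalM h mul0r. Qed.

Lemma V2 p q : p.@[y] = 0 -> q.@[y] = 0 -> ((p * q)^`M(b)).@[y] = 0.
Proof. by move=> hp hq; rewrite mderivM mevalD !mevalM hp hq !(mulr0, mul0r) addr0. Qed.

Lemma V3 p q r s : p.@[y] = 0 -> q.@[y] = 0 -> r.@[y] = 0 ->
  ((p * (q * (r * s)))^`M(b)^`M(b)).@[y] = 0.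
Proof.
move=> hp hq hr.
rewrite !mderivM !mderivD !mderivM !(mevalD, mevalM, hp, hq, hr); ring.
Qed.
Lemma V22 p q r (c d : algC) : p^`M(b) = c%:MP -> q^`M(b) = d%:MP ->
  p.@[y] = 0 -> q.@[y] = 0 -> ((p * (q * r))^`M(b)^`M(b)).@[y] = 2 * (c * d) * r.@[y].
Proof.
move=> dp dq hp hq; rewrite !(mderivM, mderivD, dp, dq, mderivC).
rewrite !(mevalD, mevalM, mevalC, hp, hq, meval0); ring.
Qed.
End PD.

Definition Psg := \prod_(e : pat) Lpoly e.

Lemma P_eval y : Psg.@[y] = \prod_(e : pat) Lval e y.
Proof. rewrite /Psg rmorph_prod /=; apply: eq_bigr => e _; exact: Lpoly_eval. Qed.

Lemma P_split2 e1 e2 : e1 != e2 ->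
  Psg = Lpoly e1 * (Lpoly e2 * \prod_(e | (e != e1) && (e != e2)) Lpoly e).
Proof.
move=> ne; rewrite /Psg (bigD1 e1) //= (bigD1 e2) //=; last by rewrite eq_sym.
Qed.

Lemma P_split3 e1 e2 e3 : e1 != e2 -> e1 != e3 -> e2 != e3 ->
  Psg = Lpoly e1 * (Lpoly e2 * (Lpoly e3 *
     \prod_(e | [&& e != e1, e != e2 & e != e3]) Lpoly e)).
Proof.
move=> n12 n13 n23; rewrite /Psg (bigD1 e1) //= (bigD1 e2) ?(eq_sym e2) //=.
rewrite (bigD1 e3) /=; last by rewrite eq_sym n13 eq_sym n23.
congr (_ * (_ * (_ * _))); apply: eq_bigl => e; by rewrite andbA.
Qed.

Lemma Pder1_zero y b e1 e2 : e1 != e2 -> Lval e1 y = 0 -> Lval e2 y = 0 ->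
  (Psg^`M(b)).@[y] = 0.
Proof.
move=> ne h1 h2; rewrite (P_split2 ne); apply: V2; first by rewrite Lpoly_eval.
by apply: V1; rewrite Lpoly_eval.
Qed.

Lemma Pder2_zero y b e1 e2 e3 : e1 != e2 -> e1 != e3 -> e2 != e3 ->
  Lval e1 y = 0 -> Lval e2 y = 0 -> Lval e3 y = 0 ->
  (Psg^`M(b)^`M(b)).@[y] = 0.
Proof.
move=> n12 n13 n23 h1 h2 h3; rewrite (P_split3 n12 n13 n23).
by apply: V3; rewrite Lpoly_eval.
Qed.

Lemma Pder1_one y b e0 : Lval e0 y = 0 ->
  (forall e, e != e0 -> Lval e y != 0) -> (Psg^`M(b)).@[y] != 0.
Proof.
move=> h0 hne; rewrite /Psg (bigD1 e0) //= mderivM mevalD !mevalM Lpoly_eval h0.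
rewrite Lpoly_der mevalC mul0r addr0 mulf_neq0 ?sv_neq0 //.
rewrite rmorph_prod /=; apply/prodf_neq0 => e he; rewrite Lpoly_eval; exact: hne.
Qed.

Lemma Pder2_two y b e1 e2 : e1 != e2 -> Lval e1 y = 0 -> Lval e2 y = 0 ->
  (forall e, e != e1 -> e != e2 -> Lval e y != 0) -> (Psg^`M(b)^`M(b)).@[y] != 0.
Proof.
move=> ne h1 h2 hne; rewrite (P_split2 ne).
set Q := \prod_(e | _) _.
have hQ : Q.@[y] != 0.
  rewrite /Q rmorph_prod /=; apply/prodf_neq0 => e /andP[he1 he2].
  by rewrite Lpoly_eval; apply: hne.
rewrite (V22 _ (Lpoly_der e1 b) (Lpoly_der e2 b)) ?Lpoly_eval //.
by rewrite !mulf_neq0 ?sv_neq0 ?pnatr_eq0.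
Qed.

Definition O5 : seq 'I_5 := [:: @Ordinal 5 0 isT; @Ordinal 5 1 isT; @Ordinal 5 2 isT; @Ordinal 5 3 isT; @Ordinal 5 4 isT].
Definition cmp (i j : 'I_5) : seq 'I_5 := [seq k <- O5 | (k != i) && (k != j)].
Definition ca i j := nth ord0 (cmp i j) 0.
Definition cb i j := nth ord0 (cmp i j) 1.
Definition cc i j := nth ord0 (cmp i j) 2.

Lemma O5P : perm_eq (index_enum 'I_5) O5.
Proof. apply: uniq_perm; first exact: index_enum_uniq. by []. 
  case=> [[|[|[|[|[|?]]]]] ?]; rewrite mem_index_enum //. Qed.

Lemma mem_O5 i : i \in O5.
Proof. by rewrite -(perm_mem O5P) mem_index_enum. Qed.

Definition cfacts (i j : 'I_5) := [&& size (cmp i j) == 3%N, (ca i j < cb i j)%N, (cb i j < cc i j)%N,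
   ca i j != i & ca i j != j] && [&& cb i j != i, cb i j != j, cc i j != i, cc i j != j &
   all (fun k => [|| k == i, k == j, k == ca i j, k == cb i j | k == cc i j]) O5].

Lemma cfacts_all : all (fun i => all (fun j => (i != j) ==> cfacts i j) O5) O5.
Proof. by vm_compute. Qed.

Lemma cfactsP i j : i != j -> cfacts i j.
Proof.
move=> hij; move/allP: cfacts_all => /(_ i (mem_O5 i)) /allP /(_ j (mem_O5 j)).
by rewrite hij.
Qed.

Section Idx.
Variables (i j : 'I_5) (hij : i != j).
Let a := ca i j. Let b := cb i j. Let c := cc i j.
Let F := cfactsP hij.
Let FF : [/\ size (cmp i j) = 3%N, (a < b)%N, (b < c)%N, a != i & a != j] /\
   [/\ b != i, b != j, c != i, c != j &
   all (fun k => [|| k == i, k == j, k == a, k == b | k == c]) O5].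
Proof. by case/andP: F => /and5P[/eqP ? ? ? ? ?] /and5P[? ? ? ? ?]. Qed.

Lemma cmpE : cmp i j = [:: a; b; c].
Proof.
case: FF => [[+ _ _ _ _] _].
rewrite /a /b /c /ca /cb /cc.
by case: (cmp i j) => [|x [|y [|z [|w s]]]].
Qed.

Lemma ab_lt : (a < b)%N. Proof. by case: FF => [[]]. Qed.
Lemma bc_lt : (b < c)%N. Proof. by case: FF => [[]]. Qed.
Lemma ai : a != i. Proof. by case: FF => [[]]. Qed.
Lemma aj : a != j. Proof. by case: FF => [[]]. Qed.
Lemma bi : b != i. Proof. by case: FF => [_ []]. Qed.
Lemma bj : b != j. Proof. by case: FF => [_ []]. Qed.
Lemma ci : c != i. Proof. by case: FF => [_ []]. Qed.
Lemma cj : c != j. Proof. by case: FF => [_ []]. Qed.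
Lemma ab : a != b. Proof. by rewrite neq_ltn ab_lt. Qed.
Lemma bc : b != c. Proof. by rewrite neq_ltn bc_lt. Qed.
Lemma ac : a != c. Proof. by rewrite neq_ltn (ltn_trans ab_lt bc_lt). Qed.
Lemma cover k : [|| k == i, k == j, k == a, k == b | k == c].
Proof. by case: FF => [_ [_ _ _ _ /allP /(_ k (mem_O5 k))]]. Qed.

Lemma sum3 (G : 'I_5 -> algC) :
  \sum_(k < 5 | (k != i) && (k != j)) G k = G a + G b + G c.
Proof.
rewrite (perm_big _ O5P) /= -big_filter -/(cmp i j) cmpE !big_cons big_nil.
by rewrite addr0 addrA.
Qed.

Lemma sum5 (G : 'I_5 -> algC) :
  \sum_(k < 5) G k = G i + G j + \sum_(k < 5 | (k != i) && (k != j)) G k.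
Proof.
rewrite (bigD1 i) //= (bigD1 j) //=; last by rewrite eq_sym.
by rewrite addrA; congr (_ + _ + _); apply: eq_bigl => k; rewrite andbC.
Qed.

Lemma Qsum (x : 'I_5 -> algC) :
  \sum_(t < 5 | (t != i) && (t != j)) x t ^+ 2
  - 2 * \sum_(s < 5 | (s != i) && (s != j))
          \sum_(t < 5 | [&& (s < t)%N, t != i & t != j]) x s * x t
  = x a ^+ 2 + x b ^+ 2 + x c ^+ 2 - 2 * (x a * x b + x a * x c + x b * x c).
Proof.
rewrite sum3 sum3; congr (_ - 2 * _).
have inner (s : 'I_5) : \sum_(t < 5 | [&& (s < t)%N, t != i & t != j]) x s * x t =
   \sum_(t <- [:: a; b; c] | (s < t)%N) x s * x t.
  rewrite -cmpE /cmp big_filter_cond (perm_big _ O5P) /=.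
  by apply: eq_bigl => t; rewrite andbC.
rewrite !inner !big_cons !big_nil ltnn ab_lt bc_lt (ltn_trans ab_lt bc_lt).
rewrite (ltnNge b a) (ltnW ab_lt) (ltnNge c a) (ltnW (ltn_trans ab_lt bc_lt)).
rewrite (ltnNge c b) (ltnW bc_lt) /= !ltnn; ring.
Qed.
End Idx.
Definition CompY (y : 'I_5 -> algC) := exists (i j : 'I_5) (z : 'I_5 -> algC),
  [/\ (i < j)%N, (forall k, z k ^+ 2 = y k ^+ 2), z i ^+ 2 = z j ^+ 2 &
      \sum_(k < 5 | (k != i) && (k != j)) z k = 0].

Lemma CompY_ne y (i j : 'I_5) (z : 'I_5 -> algC) : i != j ->
  (forall k, z k ^+ 2 = y k ^+ 2) -> z i ^+ 2 = z j ^+ 2 ->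
  \sum_(k < 5 | (k != i) && (k != j)) z k = 0 -> CompY y.
Proof.
move=> hij hz hzij hs; case: (ltngtP i j) => [lt|gt|/val_inj eq]; last by rewrite eq eqxx in hij.
  by exists i, j, z.
exists j, i, z; split=> //.
by rewrite -[RHS]hs; apply: eq_bigl => k /=; rewrite andbC.
Qed.

Lemma CompY_Scomp (v : pt6) y : v ord0 = 0 -> (forall k, xc v k = y k ^+ 2) ->
  CompY y -> exists i j : 'I_5, (i < j)%N /\ Scomp i j v.
Proof.
move=> v0 hx [i [j [z [lt hz hzij hs]]]].
have hij : i != j by rewrite neq_ltn lt.
exists i, j; split=> //; split=> //; split; first by rewrite !hx -!hz.
rewrite Qsum // !hx -!hz.
move: hs; rewrite sum3 // => hs.
have -> : z (cc i j) = - (z (ca i j) + z (cb i j)).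
  by apply/eqP; rewrite -subr_eq0 opprK addrC hs.
ring.
Qed.

Lemma pair_comp y (z : 'I_5 -> algC) (i j : 'I_5) : i != j ->
  (forall k, z k ^+ 2 = y k ^+ 2) -> \sum_k z k = 0 ->
  \sum_(k < 5 | (k != i) && (k != j)) z k = 0 -> CompY y.
Proof.
move=> hij hz hall hs; apply: (CompY_ne hij hz) => //.
move: hall; rewrite (sum5 hij) hs addr0 => /eqP; rewrite addr_eq0 => /eqP ->.
by rewrite sqrrN.
Qed.

Lemma sgn_cases (s : algC) : s ^+ 2 = 1 -> s = 1 \/ s = -1.
Proof.
move=> h; have : (s - 1) * (s + 1) = 0 by rewrite -subr_sqr h expr1n subrr.
move/eqP; rewrite mulf_eq0 => /orP[|]; rewrite ?subr_eq0 ?addr_eq0 => /eqP; by [left|right].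
Qed.

Lemma sgn_neq0 (s : algC) : s ^+ 2 = 1 -> s != 0.
Proof. by move=> h; apply/eqP => h0; move: h; rewrite h0 expr0n /= => /eqP; rewrite eq_sym oner_eq0. Qed.

Definition fl (a : 'I_5) (s : 'I_5 -> algC) k := if k == a then - s k else s k.

Lemma zero_pair y (s : 'I_5 -> algC) a b : a != b -> (forall k, s k ^+ 2 = 1) ->
  \sum_k s k * y k = 0 -> y a = 0 -> y b = 0 -> CompY y.
Proof.
move=> hab hs hsum ha hb.
apply: (@pair_comp y (fun k => s k * y k) a b) => //.
- by move=> k; rewrite exprMn hs mul1r.
- by move: hsum; rewrite (sum5 hab) ha hb !mulr0 !add0r.
Qed.

Lemma half0 (a b : algC) : a + b = 0 -> a - b = 0 -> a = 0 /\ b = 0.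
Proof.
move=> h1 h2; have h2a : 2 * a = 0 by rewrite -[RHS](addr0 0) -{1}h1 -h2; ring.
have ha : a = 0 by move/eqP: h2a; rewrite mulf_eq0 pnatr_eq0 /= => /eqP.
by split=> //; move: h1; rewrite ha add0r.
Qed.

Section Core.
Variables (y s t : 'I_5 -> algC).
Hypotheses (hs : forall k, s k ^+ 2 = 1) (ht : forall k, t k ^+ 2 = 1).
Hypotheses (hS : \sum_k s k * y k = 0) (hT : \sum_k t k * y k = 0).
Hypotheses (d1 : exists k, t k != s k) (d2 : exists k, t k != - s k).

Let A := [set k | s k == t k].
Let z k := s k * y k.
Let hz k : z k ^+ 2 = y k ^+ 2. Proof. by rewrite /z exprMn hs mul1r. Qed.

Let tnA k : k \notin A -> t k = - s k.
Proof.
rewrite inE => hk; case: (sgn_cases (hs k)) => e1; case: (sgn_cases (ht k)) => e2;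
  move: hk; rewrite e1 e2 ?eqxx // ?opprK //.
Qed.

Let sumz : \sum_k z k = 0. Proof. exact: hS. Qed.

Let SA : \sum_(k | k \in A) z k = 0 /\ \sum_(k | k \notin A) z k = 0.
Proof.
have e1 : \sum_(k | k \in A) z k + \sum_(k | k \notin A) z k = 0.
  by move: sumz; rewrite (bigID (mem A)) /=.
have e2 : \sum_(k | k \in A) z k - \sum_(k | k \notin A) z k = 0.
  rewrite -[RHS]hT [RHS](bigID (mem A)) /= -sumrN; congr (_ + _); apply: eq_bigr => k hk.
    by move: hk; rewrite inE /z => /eqP ->.
  by rewrite tnA // /z mulNr.
exact: half0.
Qed.

Let H2 (X : {set 'I_5}) : #|X| == 2%N -> \sum_(k | k \notin X) z k = 0 -> CompY y.
Proof.
case/cards2P => [i [j [hij ->]]] hs0.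
apply: (@pair_comp y z i j) => //.
by rewrite -[RHS]hs0; apply: eq_bigl => k /=; rewrite in_set2 negb_or.
Qed.

Let H1 (X : {set 'I_5}) : #|X| == 1%N -> \sum_(k | k \in X) z k = 0 ->
  exists a, X = [set a] /\ y a = 0.
Proof.
case/cards1P => [a ->]; rewrite big_set1 /z => /eqP; rewrite mulf_eq0.
by rewrite (negbTE (sgn_neq0 (hs a))) /= => /eqP ha; exists a.
Qed.

Lemma core : CompY y \/ exists a, y a = 0 /\
   ((forall k, t k = fl a s k) \/ (forall k, t k = - fl a s k)).
Proof.
have [SA1 SA2] := SA.
have hA0 : (0 < #|A|)%N.
  case: d2 => k hk; apply/card_gt0P; exists k; apply: contraR hk => /tnA ->.
  by rewrite eqxx.
have hA5 : (#|A| < 5)%N.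
  have hp : A \proper setT.
    rewrite properT; apply/eqP => hT'; case: d1 => k; have : k \in A by rewrite hT' inE.
    by rewrite inE eq_sym => ->.
  by move: (proper_card hp); rewrite cardsT card_ord.
have hC : #|~: A| = (5 - #|A|)%N.
  move: (cardsC A); rewrite card_ord => h; apply/eqP.
  by rewrite -(eqn_add2l #|A|) h subnKC // ltnW.
have SC1 : \sum_(k | k \in ~: A) z k = 0.
  by rewrite -[RHS]SA2; apply: eq_bigl => k; rewrite inE.
have SC2 : \sum_(k | k \notin ~: A) z k = 0.
  by rewrite -[RHS]SA1; apply: eq_bigl => k; rewrite inE negbK.
case hAn : #|A| hA0 hA5 => [|[|[|[|[|n]]]]] // _ _; rewrite hAn in hC.
- right; have [a [hAa ya]] : exists a, A = [set a] /\ y a = 0.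
    by apply: H1 => //; rewrite hAn.
  exists a; split=> //; right => k; rewrite /fl.
  case: eqP => [->|/eqP hk]; first by move: (set11 a); rewrite -hAa inE => /eqP <-; rewrite opprK.
  by rewrite tnA // hAa inE.
- by left; apply: (H2 (X := A)) => //; rewrite hAn.
- by left; apply: (H2 (X := ~: A)) => //; rewrite hC.
- right; have [a [hAa ya]] : exists a, ~: A = [set a] /\ y a = 0.
    by apply: H1 => //; rewrite hC.
  exists a; split=> //; left => k; rewrite /fl.
  case: eqP => [->|/eqP hk]; first by rewrite tnA // -in_setC hAa set11.
  have : k \in A by rewrite -[A]setCK hAa !inE.
  by rewrite inE => /eqP.
Qed.
End Core.
Lemma m1n1 : (-1 : algC) != 1.
Proof.
apply/eqP => h; have : (2 : algC) == 0 by rewrite -[2]/(1 + 1) -{1}h addNr.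
by rewrite pnatr_eq0.
Qed.

Lemma sv_lift e k : sv e (lift ord0 k) = (-1) ^+ e k.
Proof. by rewrite /sv liftK. Qed.

Lemma sv0 e : sv e ord0 = 1.
Proof. by rewrite /sv unlift_none. Qed.

Lemma sgnb_inj (b b' : bool) : ((-1 : algC) ^+ b == (-1) ^+ b') = (b == b').
Proof.
case: b; case: b' => //=; rewrite ?expr1 ?expr0 ?eqxx //.
  by rewrite (negbTE m1n1).
by rewrite eq_sym (negbTE m1n1).
Qed.

Lemma sv_inj e e' : (forall k, sv e k = sv e' k) -> e = e'.
Proof.
move=> h; apply/ffunP => k; move: (h (lift ord0 k)); rewrite !sv_lift.
by move/eqP; rewrite sgnb_inj => /eqP.
Qed.

Lemma sv_diff e e' : e != e' -> exists k, sv e k != sv e' k.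
Proof.
move=> ne; case: (boolP [exists k, sv e k != sv e' k]) => [/existsP//|].
rewrite negb_exists => /forallP h; case/eqP: ne; apply: sv_inj => k.
by move: (h k); rewrite negbK => /eqP.
Qed.

Lemma sv_ndiff e e' : exists k, sv e k != - sv e' k.
Proof. by exists ord0; rewrite !sv0 eq_sym m1n1. Qed.

Lemma sv_nopp e e' : ~ (forall k, sv e k = - sv e' k).
Proof. by move=> h; move: (h ord0); rewrite !sv0 => /eqP; rewrite eq_sym (negbTE m1n1). Qed.

Section Forward.
Variables (D : {mpoly algC[5]}) (hD : is_Delta' D) (v : pt6).
Hypotheses (v0 : v ord0 = 0) (hD0 : D.@[xc v] = 0)
   (hd : forall i, (D^`M(i)).@[xc v] = 0).

Let y := fun k => sqrtC (xc v k).
Let hy2 (p : {mpoly algC[5]}) : p.@[y2 y] = p.@[xc v].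
Proof. by apply: meval_eq => k; rewrite /y2 /y sqrtCK. Qed.
Let hP : Psg = D \mPo squares5. Proof. by rewrite hD. Qed.

Lemma forward : CompY y.
Proof.
have P0 : \prod_(e : pat) Lval e y = 0 by rewrite -P_eval hP E0 hy2.
have /eqP/prodf_eq0 [e0 _ /eqP h0] := P0.
have [e1 /andP[ne10 /eqP h1]] : exists e1, (e1 != e0) && (Lval e1 y == 0).
  case: (boolP [exists e1, (e1 != e0) && (Lval e1 y == 0)]) => [/existsP//|].
  rewrite negb_exists => /forallP hn.
  have hne : forall e, e != e0 -> Lval e y != 0.
    by move=> e he; move: (hn e); rewrite he.
  move: (Pder1_one ord0 h0 hne).
  by rewrite hP E1 hy2 hd mulr0 eqxx.
have n01 : e0 != e1 by rewrite eq_sym.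
case: (core (sv_sq e0) (sv_sq e1) h0 h1 (sv_diff ne10) (sv_ndiff e1 e0)) => [//|[a [ya hfl]]].
have [e2 /and3P[ne20 ne21 /eqP h2]] :
    exists e2, [&& e2 != e0, e2 != e1 & Lval e2 y == 0].
  case: (boolP [exists e2, [&& e2 != e0, e2 != e1 & Lval e2 y == 0]]) => [/existsP//|].
  rewrite negb_exists => /forallP hn.
  have hne : forall e, e != e0 -> e != e1 -> Lval e y != 0.
    by move=> e he he'; move: (hn e); rewrite he he'.
  move: (Pder2_two a n01 h0 h1 hne).
  by rewrite hP E2 // hy2 hd mulr0 eqxx.
case: (core (sv_sq e0) (sv_sq e2) h0 h2 (sv_diff ne20) (sv_ndiff e2 e0)) => [//|[a' [ya' hfl2]]].
case: (eqVneq a a') => [eaa|naa]; last exact: (zero_pair naa (@sv_sq e0) h0 ya ya').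
subst a'; exfalso.
case: hfl => hf1; case: hfl2 => hf2.
- by move/eqP: ne21; apply; apply: sv_inj => k; rewrite hf1 hf2.
- by apply: (@sv_nopp e2 e1) => k; rewrite hf1 hf2.
- by apply: (@sv_nopp e2 e1) => k; rewrite hf1 hf2 opprK.
- by move/eqP: ne21; apply; apply: sv_inj => k; rewrite hf1 hf2.
Qed.
End Forward.
Definition pv (R : Type) (i j : 'I_5) (A B C E : R) (k : 'I_5) : R :=
  if (k == i) || (k == j) then A else if k == ca i j then B
  else if k == cb i j then C else E.

Definition param (R : nzRingType) (i j : 'I_5) (r s t : R) : 'I_6 -> R :=
  fun k => if unlift ord0 k is Some k' then
     pv i j (r ^+ 2) (s ^+ 2) (t ^+ 2) ((s + t) ^+ 2) k' else 0.

Definition flipset (l : seq 'I_5) (k : 'I_5) : algC := if k \in l then -1 else 1.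

Section Param.
Variables (i j : 'I_5) (hij : i != j).
Let a := ca i j. Let b := cb i j. Let c := cc i j.

Let nij : (i == j) = false. Proof. exact: negbTE (hij). Qed.
Let nji : (j == i) = false. Proof. by rewrite eq_sym nij. Qed.
Let nai : (ca i j == i) = false. Proof. exact: negbTE (ai hij). Qed.
Let nia : (i == ca i j) = false. Proof. by rewrite eq_sym nai. Qed.
Let naj : (ca i j == j) = false. Proof. exact: negbTE (aj hij). Qed.
Let nja : (j == ca i j) = false. Proof. by rewrite eq_sym naj. Qed.
Let nbi : (cb i j == i) = false. Proof. exact: negbTE (bi hij). Qed.
Let nib : (i == cb i j) = false. Proof. by rewrite eq_sym nbi. Qed.
Let nbj : (cb i j == j) = false. Proof. exact: negbTE (bj hij). Qed.
Let njb : (j == cb i j) = false. Proof. by rewrite eq_sym nbj. Qed.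
Let nci : (cc i j == i) = false. Proof. exact: negbTE (ci hij). Qed.
Let nic : (i == cc i j) = false. Proof. by rewrite eq_sym nci. Qed.
Let ncj : (cc i j == j) = false. Proof. exact: negbTE (cj hij). Qed.
Let njc : (j == cc i j) = false. Proof. by rewrite eq_sym ncj. Qed.
Let nab : (ca i j == cb i j) = false. Proof. exact: negbTE (ab hij). Qed.
Let nba : (cb i j == ca i j) = false. Proof. by rewrite eq_sym nab. Qed.
Let nbc : (cb i j == cc i j) = false. Proof. exact: negbTE (bc hij). Qed.
Let ncb : (cc i j == cb i j) = false. Proof. by rewrite eq_sym nbc. Qed.
Let nac : (ca i j == cc i j) = false. Proof. exact: negbTE (ac hij). Qed.
Let nca : (cc i j == ca i j) = false. Proof. by rewrite eq_sym nac. Qed.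
Let neqs := (eqxx, nij, nji, nai, nia, naj, nja, nbi, nib, nbj, njb, nci, nic, ncj, njc, nab, nba, nbc, ncb, nac, nca).

Lemma pv_i (R : Type) (A B C E : R) : pv i j A B C E i = A.
Proof. by rewrite /pv !neqs. Qed.
Lemma pv_j (R : Type) (A B C E : R) : pv i j A B C E j = A.
Proof. by rewrite /pv !neqs orbT. Qed.
Lemma pv_a (R : Type) (A B C E : R) : pv i j A B C E a = B.
Proof. by rewrite /pv /a !neqs. Qed.
Lemma pv_b (R : Type) (A B C E : R) : pv i j A B C E b = C.
Proof. by rewrite /pv /b !neqs. Qed.
Lemma pv_c (R : Type) (A B C E : R) : pv i j A B C E c = E.
Proof. by rewrite /pv /c !neqs. Qed.
Definition pvs := (pv_i, pv_j, pv_a, pv_b, pv_c).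

Lemma cover5 (P : 'I_5 -> Prop) : P i -> P j -> P a -> P b -> P c -> forall k, P k.
Proof. by move=> Pi Pj Pa Pb Pc k; case/orP: (cover hij k) => [/eqP->//|/or4P[] /eqP->]. Qed.

Lemma xc_param (r s t : algC) k :
  xc (param i j r s t) k = pv i j (r ^+ 2) (s ^+ 2) (t ^+ 2) ((s + t) ^+ 2) k.
Proof. by rewrite /xc /param liftK. Qed.

Lemma Qfact (s t u : algC) :
  s ^+ 2 ^+ 2 + t ^+ 2 ^+ 2 + u ^+ 2 ^+ 2 - 2 * (s ^+ 2 * t ^+ 2 + s ^+ 2 * u ^+ 2 + t ^+ 2 * u ^+ 2)
  = (s + t + u) * (s + t - u) * (s - t + u) * (s - t - u).
Proof. ring. Qed.

Lemma Scomp_char v : Scomp i j v <-> exists r s t, v =1 param i j r s t.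
Proof.
split.
  case=> v0 [xij hQ]; move: hQ; rewrite Qsum // => hQ.
  pose x := xc v.
  exists (sqrtC (x i)), (sqrtC (x a)).
  have [t [ht1 ht2]] : exists t, t ^+ 2 = x b /\ (sqrtC (x a) + t) ^+ 2 = x c.
    set s0 := sqrtC (x a); set t0 := sqrtC (x b); set u0 := sqrtC (x c).
    have ea : x a = s0 ^+ 2 by rewrite sqrtCK.
    have eb : x b = t0 ^+ 2 by rewrite sqrtCK.
    have ec : x c = u0 ^+ 2 by rewrite sqrtCK.
    rewrite eb ec; move: hQ; rewrite -/x ea eb ec Qfact.
    move/eqP; rewrite !mulf_eq0 !subr_eq0 -!orbA => /or4P[] h.
    - have hu : u0 = - (s0 + t0) by apply/eqP; rewrite -addr_eq0 addrC.
      by exists t0; split=> //; rewrite hu sqrrN.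
    - by exists t0; split=> //; rewrite (eqP h).
    - have hu : u0 = - (s0 + - t0) by apply/eqP; rewrite -addr_eq0 addrC.
      by exists (- t0); split; rewrite ?hu !sqrrN.
    - by exists (- t0); split; rewrite ?sqrrN // (eqP h).
  exists t => k; case: (unliftP ord0 k) => [k'|] -> /=; last by rewrite /param unlift_none.
  rewrite /param liftK -/(xc v k') -/x; move: k'; apply: cover5; rewrite !pvs ?sqrtCK // -/x; by rewrite ?xij.
case=> r [s [t hv]]; split; first by rewrite hv /param unlift_none.
have hx k : xc v k = pv i j (r ^+ 2) (s ^+ 2) (t ^+ 2) ((s + t) ^+ 2) k.
  by rewrite /xc hv -/(xc _ _) xc_param.
split; first by rewrite !hx /pv !neqs /= ?orbT.
rewrite Qsum // !hx.
rewrite !pvs.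
ring.
Qed.
End Param.
Definition pat_of (sg : 'I_5 -> algC) : pat := [ffun k => sg (lift ord0 k) != sg ord0].

Lemma pat_of_sv sg (hs : forall k, sg k ^+ 2 = 1) k : sv (pat_of sg) k = sg ord0 * sg k.
Proof.
case: (unliftP ord0 k) => [k'|] ->; last by rewrite sv0 -expr2 hs.
rewrite sv_lift ffunE.
case: (sgn_cases (hs ord0)) => ->; case: (sgn_cases (hs (lift ord0 k'))) => ->;
  rewrite ?eqxx ?(negbTE m1n1) ?(eq_sym 1 (-1)) ?(negbTE m1n1) /=; ring.
Qed.

Lemma Lval_pat sg (hs : forall k, sg k ^+ 2 = 1) y :
  Lval (pat_of sg) y = sg ord0 * \sum_k sg k * y k.
Proof.
rewrite /Lval mulr_sumr; apply: eq_bigr => k _; rewrite pat_of_sv //; ring.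
Qed.

Lemma pat_of_ne sg tg (hs : forall k, sg k ^+ 2 = 1) (ht : forall k, tg k ^+ 2 = 1) k1 k2 :
  sg k1 != tg k1 -> sg k2 = tg k2 -> pat_of sg != pat_of tg.
Proof.
move=> d1 e2; apply/eqP => he.
have h k : sg ord0 * sg k = tg ord0 * tg k by rewrite -!pat_of_sv // he.
have h0 : sg ord0 = tg ord0.
  move: (h k2); rewrite e2 => /eqP; rewrite -subr_eq0 -mulrBl mulf_eq0.
  by rewrite (negbTE (sgn_neq0 (ht k2))) orbF subr_eq0 => /eqP.
move: (h k1); rewrite h0 => /eqP; rewrite -subr_eq0 -mulrBr mulf_eq0.
by rewrite (negbTE (sgn_neq0 (ht ord0))) /= subr_eq0 (negbTE d1).
Qed.

Lemma flipset_sq l k : flipset l k ^+ 2 = 1.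
Proof. by rewrite /flipset; case: (k \in l); rewrite ?sqrrN expr1n. Qed.

Lemma fs_ne l1 l2 k1 k2 : (k1 \in l1) != (k1 \in l2) -> (k2 \in l1) = (k2 \in l2) ->
  pat_of (flipset l1) != pat_of (flipset l2).
Proof.
move=> d e; apply: (@pat_of_ne _ _ (flipset_sq l1) (flipset_sq l2) k1 k2).
  by rewrite /flipset; move: d; case: (k1 \in l1); case: (k1 \in l2) => //= _;
     rewrite ?m1n1 // eq_sym m1n1.
by rewrite /flipset e.
Qed.

Section Backward.
Variables (D : {mpoly algC[5]}) (hD : is_Delta' D) (i j : 'I_5) (hij : i != j).
Variables (r s t : algC) (v : pt6) (hv : v =1 param i j r s t).
Let a := ca i j. Let b := cb i j. Let c := cc i j.
Let nij : (i == j) = false. Proof. exact: negbTE (hij). Qed.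
Let nji : (j == i) = false. Proof. by rewrite eq_sym nij. Qed.
Let nai : (ca i j == i) = false. Proof. exact: negbTE (ai hij). Qed.
Let nia : (i == ca i j) = false. Proof. by rewrite eq_sym nai. Qed.
Let naj : (ca i j == j) = false. Proof. exact: negbTE (aj hij). Qed.
Let nja : (j == ca i j) = false. Proof. by rewrite eq_sym naj. Qed.
Let nbi : (cb i j == i) = false. Proof. exact: negbTE (bi hij). Qed.
Let nib : (i == cb i j) = false. Proof. by rewrite eq_sym nbi. Qed.
Let nbj : (cb i j == j) = false. Proof. exact: negbTE (bj hij). Qed.
Let njb : (j == cb i j) = false. Proof. by rewrite eq_sym nbj. Qed.
Let nci : (cc i j == i) = false. Proof. exact: negbTE (ci hij). Qed.
Let nic : (i == cc i j) = false. Proof. by rewrite eq_sym nci. Qed.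
Let ncj : (cc i j == j) = false. Proof. exact: negbTE (cj hij). Qed.
Let njc : (j == cc i j) = false. Proof. by rewrite eq_sym ncj. Qed.
Let nab : (ca i j == cb i j) = false. Proof. exact: negbTE (ab hij). Qed.
Let nba : (cb i j == ca i j) = false. Proof. by rewrite eq_sym nab. Qed.
Let nbc : (cb i j == cc i j) = false. Proof. exact: negbTE (bc hij). Qed.
Let ncb : (cc i j == cb i j) = false. Proof. by rewrite eq_sym nbc. Qed.
Let nac : (ca i j == cc i j) = false. Proof. exact: negbTE (ac hij). Qed.
Let nca : (cc i j == ca i j) = false. Proof. by rewrite eq_sym nac. Qed.
Let neqs := (eqxx, nij, nji, nai, nia, naj, nja, nbi, nib, nbj, njb, nci, nic, ncj, njc, nab, nba, nbc, ncb, nac, nca).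


Let y := pv i j r s t (- (s + t)).
Let hP : Psg = D \mPo squares5. Proof. by rewrite hD. Qed.

Let hxc k : xc v k = pv i j (r ^+ 2) (s ^+ 2) (t ^+ 2) ((s + t) ^+ 2) k.
Proof. by rewrite /xc hv -/(xc _ _) xc_param. Qed.

Let hy2 (p : {mpoly algC[5]}) : p.@[y2 y] = p.@[xc v].
Proof.
apply: meval_eq => k; rewrite hxc /y2 /y; move: k; apply: (cover5 hij);
  by rewrite !(pvs hij) ?sqrrN.
Qed.

Let sum_y (sg : 'I_5 -> algC) : \sum_k sg k * y k =
  sg i * r + sg j * r + sg a * s + sg b * t + sg c * (- (s + t)).
Proof. by rewrite (sum5 hij) (sum3 hij) /y !(pvs hij) !addrA. Qed.

Let Zfs l : \sum_k flipset l k * y k = 0 -> Lval (pat_of (flipset l)) y = 0.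
Proof. by move=> h; rewrite Lval_pat ?h ?mulr0 //; exact: flipset_sq. Qed.

Lemma backward : SingCone D v.
Proof.
apply/SingCone_iff.
pose e1 := pat_of (flipset [:: j]); pose e2 := pat_of (flipset [:: i]).
have Z1 : Lval e1 y = 0.
  by apply: Zfs; rewrite sum_y /flipset !inE !neqs; ring.
have Z2 : Lval e2 y = 0.
  by apply: Zfs; rewrite sum_y /flipset !inE !neqs; ring.
have n12 : e1 != e2 by apply: (@fs_ne _ _ i a); rewrite !inE !neqs.
split; first by rewrite hv /param unlift_none.
split.
  rewrite -hy2 -E0 -hP P_eval; apply/eqP/prodf_eq0; exists e1 => //; exact/eqP.
move=> k; case: (eqVneq (y k) 0) => [yk0|ykn0]; last first.
  have := E1 D y k; rewrite -hP (Pder1_zero k n12 Z1 Z2) hy2 => /esym/eqP.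
  by rewrite !mulf_eq0 (negbTE ykn0) pnatr_eq0 orbF /= => /eqP.
suff [e3 [Z3 n13 n23]] : exists e3, [/\ Lval e3 y = 0, e1 != e3 & e2 != e3].
  have := @E2 D y k yk0; rewrite -hP (Pder2_zero k n12 n13 n23 Z1 Z2 Z3) hy2 => /esym/eqP.
  by rewrite mulf_eq0 pnatr_eq0 /= => /eqP.
move: k yk0; apply: (cover5 hij); rewrite /y !(pvs hij) => h0.
- exists (pat_of (flipset [::])); split.
  + by apply: Zfs; rewrite sum_y /flipset !in_nil h0; ring.
  + by apply: (@fs_ne _ _ j a); rewrite !inE !neqs.
  + by apply: (@fs_ne _ _ i a); rewrite !inE !neqs.
- exists (pat_of (flipset [::])); split.
  + by apply: Zfs; rewrite sum_y /flipset !in_nil h0; ring.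
  + by apply: (@fs_ne _ _ j a); rewrite !inE !neqs.
  + by apply: (@fs_ne _ _ i a); rewrite !inE !neqs.
- exists (pat_of (flipset [:: j; a])); split.
  + by apply: Zfs; rewrite sum_y /flipset !inE !neqs h0 /=; ring.
  + by apply: (@fs_ne _ _ a b); rewrite !inE !neqs.
  + by apply: (@fs_ne _ _ i b); rewrite !inE !neqs.
- exists (pat_of (flipset [:: j; b])); split.
  + by apply: Zfs; rewrite sum_y /flipset !inE !neqs h0 /=; ring.
  + by apply: (@fs_ne _ _ b a); rewrite !inE !neqs.
  + by apply: (@fs_ne _ _ i a); rewrite !inE !neqs.
- exists (pat_of (flipset [:: j; c])); split.
  + apply: Zfs; rewrite sum_y /flipset !inE !neqs.
    have hst : s + t = 0 by rewrite -[s + t]opprK h0 oppr0.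
    have -> : s = - t by apply/eqP; rewrite -addr_eq0 hst.
    rewrite /=; ring.
  + by apply: (@fs_ne _ _ c a); rewrite !inE !neqs.
  + by apply: (@fs_ne _ _ i a); rewrite !inE !neqs.
Qed.
End Backward.
Lemma eval_map (n : nat) (p : {mpoly algC[n]}) (w : 'I_n -> {poly algC}) l :
  ((map_mpoly (@polyC algC) p).@[w]).[l] = p.@[fun k => (w k).[l]].
Proof.
elim/mpolyind: p => [|c m p _ _ ih]; first by rewrite !raddf0 horner0.
rewrite !raddfD /= hornerD ih; congr (_ + _).
rewrite map_mpolyZ map_mpolyX !mevalZ !mevalX.
change ((c%:P * \prod_(i < n) w i ^+ m i).[l] = c * \prod_(i < n) (w i).[l] ^+ m i).
rewrite hornerCM horner_prod.
by congr (_ * _); apply: eq_bigr => k _; rewrite horner_exp.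
Qed.

Lemma exists_nonroot (q : {poly algC}) : q != 0 -> exists l, q.[l] != 0.
Proof.
move=> nq; case: (boolP [forall k : 'I_(size q), q.[k%:R] == 0]) => [/forallP h|]; last first.
  by rewrite negb_forall => /existsP [k hk]; exists k%:R.
pose rs := [seq (val k)%:R | k <- enum 'I_(size q)] : seq algC.
have hr : all (root q) rs by apply/allP => x /mapP [k _ ->]; rewrite /root; apply: h.
have hu : uniq rs.
  rewrite map_inj_uniq ?enum_uniq // => k1 k2 /eqP; rewrite eqr_nat => /eqP /val_inj.
  by [].
by have := max_poly_roots nq hr hu; rewrite size_map size_enum_ord ltnn.
Qed.
Lemma horner_pv i j (A B C E : {poly algC}) l k :
  (pv i j A B C E k).[l] = pv i j A.[l] B.[l] C.[l] E.[l] k.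
Proof. by rewrite /pv; case: ifP => _ //; case: ifP => _ //; case: ifP. Qed.

Lemma horner_param i j (R S T : {poly algC}) l k :
  (param i j R S T k).[l] = param i j R.[l] S.[l] T.[l] k.
Proof.
rewrite /param; case: unlift => [k'|]; last by rewrite horner0.
by rewrite horner_pv !horner_exp hornerD.
Qed.

Lemma line_arg i j (hij : i != j) (p1 p2 : {mpoly algC[6]}) v1 v2 :
  Scomp i j v1 -> Scomp i j v2 -> p1.@[v1] != 0 -> p2.@[v2] != 0 ->
  exists v, [/\ Scomp i j v, p1.@[v] != 0 & p2.@[v] != 0].
Proof.
move=> /(Scomp_char hij) [r1 [s1 [t1 hv1]]] /(Scomp_char hij) [r2 [s2 [t2 hv2]]] h1 h2.
pose lin (u1 u2 : algC) : {poly algC} := u1%:P + (u2 - u1) *: 'X.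
have hlin u1 u2 l : (lin u1 u2).[l] = u1 + (u2 - u1) * l.
  by rewrite /lin hornerD hornerC hornerZ hornerX.
pose w := param i j (lin r1 r2) (lin s1 s2) (lin t1 t2).
pose q1 := (map_mpoly (@polyC algC) p1).@[w].
pose q2 := (map_mpoly (@polyC algC) p2).@[w].
have hq l (p : {mpoly algC[6]}) : ((map_mpoly (@polyC algC) p).@[w]).[l] =
   p.@[param i j (r1 + (r2 - r1) * l) (s1 + (s2 - s1) * l) (t1 + (t2 - t1) * l)].
  by rewrite eval_map; apply: meval_eq => k; rewrite /w horner_param !hlin.
have hq1 : q1.[0] != 0.
  rewrite /q1 hq; apply: contra h1 => /eqP <-; apply/eqP; apply: meval_eq => k.
  by rewrite hv1 !mulr0 !addr0.
have hq2 : q2.[1] != 0.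
  rewrite /q2 hq; apply: contra h2 => /eqP <-; apply/eqP; apply: meval_eq => k.
  by rewrite hv2 !mulr1 !subrKC.
have nq : q1 * q2 != 0.
  rewrite mulf_neq0 //.
    by apply: contra hq1 => /eqP ->; rewrite horner0.
  by apply: contra hq2 => /eqP ->; rewrite horner0.
have [l hl] := exists_nonroot nq.
exists (param i j (r1 + (r2 - r1) * l) (s1 + (s2 - s1) * l) (t1 + (t2 - t1) * l)).
move: hl; rewrite hornerM mulf_eq0 negb_or => /andP[a1 a2].
split; rewrite -?hq //.
by apply/(Scomp_char hij); do 3 eexists.
Qed.

Definition Qpoly (i j : 'I_5) : {mpoly algC[6]} :=
  \sum_(t < 5 | (t != i) && (t != j)) 'X_(lift ord0 t) ^+ 2
  - 2 * \sum_(s < 5 | (s != i) && (s != j))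
          \sum_(t < 5 | [&& (s < t)%N, t != i & t != j]) 'X_(lift ord0 s) * 'X_(lift ord0 t).

Lemma Qpoly_eval i j v : (Qpoly i j).@[v] =
  \sum_(t < 5 | (t != i) && (t != j)) xc v t ^+ 2
  - 2 * \sum_(s < 5 | (s != i) && (s != j))
          \sum_(t < 5 | [&& (s < t)%N, t != i & t != j]) xc v s * xc v t.
Proof.
rewrite /Qpoly rmorphB rmorphM /= rmorph_nat !rmorph_sum /=; congr (_ - _ * _).
  by apply: eq_bigr => t _; rewrite rmorphXn /= mevalXU.
apply: eq_bigr => s _; rewrite rmorph_sum /=; apply: eq_bigr => t _.
by rewrite rmorphM /= !mevalXU.
Qed.

Lemma Scomp_closed i j : zclosed (Scomp i j).
Proof.
exists (fun p => p = 'X_ord0 \/ p = 'X_(lift ord0 i) - 'X_(lift ord0 j) \/ p = Qpoly i j).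
move=> v; split.
  case=> v0 [xij hQ] p [->|[->|->]].
  - by rewrite mevalXU.
  - by rewrite mevalB !mevalXU; apply/eqP; rewrite subr_eq0; apply/eqP.
  - by rewrite Qpoly_eval.
move=> h; split; first by rewrite -(mevalXU v ord0); apply: h; left.
split; last by rewrite -Qpoly_eval; apply: h; right; right.
apply/eqP; rewrite -subr_eq0; apply/eqP.
by rewrite /xc -!(mevalXU v) -mevalB; apply: h; right; left.
Qed.

Lemma Scomp_irr i j : i != j -> zirreducible (Scomp i j).
Proof.
move=> hij; split.
  by exists (param i j 0 0 0); apply/(Scomp_char hij); exists 0, 0, 0.
move=> Z1 Z2 [S1 hS1] [S2 hS2] hU.
case: (classic (forall v, Scomp i j v -> Z1 v)) => [|n1]; [by left | right].
move=> v2 hv2; apply: NNPP => n2.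
have [v1 hv1] : exists v1, Scomp i j v1 /\ ~ Z1 v1.
  apply: NNPP => hn; apply: n1 => v hv; apply: NNPP => hz; apply: hn; by exists v.
case: hv1 => hv1 nz1.
have [p1 [hp1 np1]] : exists p1, S1 p1 /\ p1.@[v1] != 0.
  apply: NNPP => hn; apply: nz1; apply/hS1 => p hp; apply: NNPP => hp0.
  by apply: hn; exists p; split => //; apply/eqP.
have [p2 [hp2 np2]] : exists p2, S2 p2 /\ p2.@[v2] != 0.
  apply: NNPP => hn; apply: n2; apply/hS2 => p hp; apply: NNPP => hp0.
  by apply: hn; exists p; split => //; apply/eqP.
have [v [hv a1 a2]] := line_arg hij hv1 hv2 np1 np2.
case: (hU v hv) => [/hS1 /(_ p1 hp1) | /hS2 /(_ p2 hp2)] /eqP.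
  by rewrite (negbTE a1).
by rewrite (negbTE a2).
Qed.

Definition rvn (i j k : 'I_5) : nat := pv i j 0 1 4 9 k.

Lemma rvn_all : all (fun i : 'I_5 => all (fun j : 'I_5 => all (fun k : 'I_5 => all (fun l : 'I_5 =>
  (i < j)%N ==> (k < l)%N ==> (rvn i j k == rvn i j l) ==> (k == i) && (l == j)) O5) O5) O5) O5.
Proof. by vm_compute. Qed.

Lemma pv_nat (i j : 'I_5) A B C E k :
  pv i j (A%:R : algC) B%:R C%:R E%:R k = (pv i j A B C E k)%:R.
Proof. by rewrite /pv; case: ifP => _ //; case: ifP => _ //; case: ifP. Qed.

Lemma Scomp_distinct (i j k l : 'I_5) : (i < j)%N -> (k < l)%N ->
  (forall v, Scomp i j v -> Scomp k l v) -> i = k /\ j = l.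
Proof.
move=> hij hkl hs.
have nij : i != j by rewrite neq_ltn hij.
have := hs (param i j 0 1 2); case.
  by apply/(Scomp_char nij); exists 0, 1, 2.
move=> _ []; rewrite !xc_param.
have e : pv i j ((0 : algC) ^+ 2) (1 ^+ 2) (2 ^+ 2) ((1 + 2) ^+ 2) =1
         (fun m => (rvn i j m)%:R).
  move=> m; rewrite /rvn -pv_nat; congr pv.
  - by rewrite expr0n.
  - by rewrite expr1n.
  - by rewrite -natrX.
  - ring.
rewrite !e => /eqP; rewrite eqr_nat => hr _.
move/allP: rvn_all => /(_ i (mem_O5 i)) /allP /(_ j (mem_O5 j)) /allP /(_ k (mem_O5 k)).
move/allP => /(_ l (mem_O5 l)); rewrite hij hkl hr /= => /andP[/eqP -> /eqP ->].
by [].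
Qed.

Unset Implicit Arguments.
Set Strict Implicit.
Set Printing Implicit Defensive.

Theorem mainTheorem8 (D : {mpoly algC[5]}) (hD : is_Delta' D) :
  (forall v : pt6, SingCone D v <-> exists i j : 'I_5, (i < j)%N /\ Scomp i j v) /\
  (forall i j : 'I_5, (i < j)%N -> zclosed (Scomp i j) /\ zirreducible (Scomp i j)) /\
  (forall i j k l : 'I_5, (i < j)%N -> (k < l)%N ->
     (forall v, Scomp i j v -> Scomp k l v) -> i = k /\ j = l).
Proof.
split.
  move=> v; split.
    move/SingCone_iff => [v0 [hD0 hd]].
    apply: (CompY_Scomp (y := fun k => sqrtC (xc v k))) => //.
      by move=> k; rewrite sqrtCK.
    exact: (forward hD hD0 hd).
  case=> i [j [hij hS]].
  have nij : i != j by rewrite neq_ltn hij.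
  have [r [s [t hv]]] := (Scomp_char nij v).1 hS.
  exact: (backward hD nij hv).
split.
  move=> i j hij; have nij : i != j by rewrite neq_ltn hij.
  by split; [exact: Scomp_closed | exact: Scomp_irr].
exact: Scomp_distinct.
Qed.
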